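(* Every label of the shape $-\mid open\ n.T_1$ (with $n$ an ambient name and $T_1$ a pure process) of the mobile-ambient transition system $M_I$ is stable under $\sim^{BS}_M$: whenever $P\sim^{BS}_M Q$ and $P\xrightarrow{-|open\ n.T_1}_{M_I}P'$, there is $Q'$ with $Q\xrightarrow{-|open\ n.T_1}_{M_I}Q'$ and $P'\sim^{BS}_M Q'$.
   Context: Mobile ambients (finite, communication-free fragment). Pure processes $P::=\mathbf{0}\mid n[P]\mid M.P\mid(\nu n)P\mid P_1|P_2$, $M::=in\ n\mid out\ n\mid open\ n$. Structural congruence $\equiv$: least congruence with $|$ commutative, associative, unit $\mathbf{0}$; $(\nu n)(\nu m)P\equiv(\nu m)(\nu n)P$; $(\nu n)(P|Q)\equiv P|(\nu n)Q$ if $n\notin fn(P)$; $(\nu n)m[P]\equiv m[(\nu n)P]$ if $n\ne m$; $(\nu n)M.P\equiv M.(\nu n)P$ if $n\notin fn(M)$; $\alpha$-conversion. Reduction $\rightsquigarrow$: least relation closed under $\equiv$, $(\nu n)-$, $n[-]$, $-|R$, generated by $n[in\ m.P|Q]|m[R]\rightsquigarrow m[n[P|Q]|R]$, $m[n[out\ m.P|Q]|R]\rightsquigarrow n[P|Q]|m[R]$, $open\ n.P|n[Q]\rightsquigarrow P|Q$. Barb $P\downarrow_n$ iff $P\equiv(\nu A)(n[Q]|R)$ with $n\notin A$. Barbed saturated bisimilarity $\sim^{BS}_M$ is the largest symmetric relation $\mathcal{R}$ on pure processes such that if $P\,\mathcal{R}\,Q$ then for every (pure, unary) context $C[-]$ and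 name $n$: $C[P]\downarrow_n$ implies $C[Q]\downarrow_n$, and $C[P]\rightsquigarrow P'$ implies $C[Q]\rightsquigarrow Q'$ for some $Q'$ with $P'\,\mathcal{R}\,Q'$. In $M_I$, $P\xrightarrow{-|open\ n.T_1}_{M_I}P'$ holds iff $P\equiv(\nu A)(n[P_1]|P_2)$ with $n\notin A$ and $P'\equiv(\nu A)(P_1|T_1|P_2)$ (with $A$ $\alpha$-converted to avoid capturing free names of $T_1$); this is the instantiation of the rule (CoOpen) $P\xrightarrow{-|open\ n.X_1}(\nu A)(P_1|X_1|P_2)$ by substituting $T_1$ for the process variable $X_1$. *)

(* Defs.v *)
(* Finite, communication-free pure mobile ambients. *)
From Stdlib Require Import List Arith.
Import ListNotations.

Definition name := nat.

Inductive cap : Type :=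
| CIn : name -> cap
| COut : name -> cap
| COpen : name -> cap.

Inductive proc : Type :=
| PNil : proc
| PAmb : name -> proc -> proc
| PAct : cap -> proc -> proc
| PRes : name -> proc -> proc
| PPar : proc -> proc -> proc.

Definition fn_cap (M : cap) : list name :=
  match M with CIn n | COut n | COpen n => [n] end.

Fixpoint fn (P : proc) : list name :=
  match P with
  | PNil => []
  | PAmb n P => n :: fn P
  | PAct M P => fn_cap M ++ fn P
  | PRes n P => remove Nat.eq_dec n (fn P)
  | PPar P Q => fn P ++ fn Q
  end.

(* name swapping (used for alpha-conversion, nominal style) *)
Definition swap_name (a b x : name) : name :=
  if Nat.eqb x a then b else if Nat.eqb x b then a else x.

Definition swap_cap (a b : name) (M : cap) : cap :=
  match M with
  | CIn n => CIn (swap_name a b n)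
  | COut n => COut (swap_name a b n)
  | COpen n => COpen (swap_name a b n)
  end.

Fixpoint swap (a b : name) (P : proc) : proc :=
  match P with
  | PNil => PNil
  | PAmb n P => PAmb (swap_name a b n) (swap a b P)
  | PAct M P => PAct (swap_cap a b M) (swap a b P)
  | PRes n P => PRes (swap_name a b n) (swap a b P)
  | PPar P Q => PPar (swap a b P) (swap a b Q)
  end.

Fixpoint nus (A : list name) (P : proc) : proc :=
  match A with
  | [] => P
  | n :: A' => PRes n (nus A' P)
  end.

Inductive scong : proc -> proc -> Prop :=
| sc_refl P : scong P P
| sc_sym P Q : scong P Q -> scong Q P
| sc_trans P Q R : scong P Q -> scong Q R -> scong P R
| sc_amb n P Q : scong P Q -> scong (PAmb n P) (PAmb n Q)
| sc_act M P Q : scong P Q -> scong (PAct M P) (PAct M Q)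
| sc_res n P Q : scong P Q -> scong (PRes n P) (PRes n Q)
| sc_parl P Q R : scong P Q -> scong (PPar P R) (PPar Q R)
| sc_parr P Q R : scong P Q -> scong (PPar R P) (PPar R Q)
| sc_par_comm P Q : scong (PPar P Q) (PPar Q P)
| sc_par_assoc P Q R : scong (PPar (PPar P Q) R) (PPar P (PPar Q R))
| sc_par_nil P : scong (PPar P PNil) P
| sc_res_res n m P : scong (PRes n (PRes m P)) (PRes m (PRes n P))
| sc_res_par n P Q : ~ In n (fn P) -> scong (PRes n (PPar P Q)) (PPar P (PRes n Q))
| sc_res_amb n m P : n <> m -> scong (PRes n (PAmb m P)) (PAmb m (PRes n P))
| sc_res_act n M P : ~ In n (fn_cap M) -> scong (PRes n (PAct M P)) (PAct M (PRes n P))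
| sc_alpha n m P : ~ In m (fn P) -> scong (PRes n P) (PRes m (swap n m P)).

Inductive red : proc -> proc -> Prop :=
| r_in n m P Q R :
    red (PPar (PAmb n (PPar (PAct (CIn m) P) Q)) (PAmb m R))
        (PAmb m (PPar (PAmb n (PPar P Q)) R))
| r_out n m P Q R :
    red (PAmb m (PPar (PAmb n (PPar (PAct (COut m) P) Q)) R))
        (PPar (PAmb n (PPar P Q)) (PAmb m R))
| r_open n P Q :
    red (PPar (PAct (COpen n) P) (PAmb n Q)) (PPar P Q)
| r_res n P P' : red P P' -> red (PRes n P) (PRes n P')
| r_amb n P P' : red P P' -> red (PAmb n P) (PAmb n P')
| r_par P P' R : red P P' -> red (PPar P R) (PPar P' R)
| r_scong P P' Q Q' : scong P P' -> red P' Q' -> scong Q' Q -> red P Q.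

Definition barb (P : proc) (n : name) : Prop :=
  exists A Q R, scong P (nus A (PPar (PAmb n Q) R)) /\ ~ In n A.

Inductive ctx : Type :=
| CHole : ctx
| CAmb : name -> ctx -> ctx
| CAct : cap -> ctx -> ctx
| CRes : name -> ctx -> ctx
| CParL : ctx -> proc -> ctx
| CParR : proc -> ctx -> ctx.

Fixpoint fill (C : ctx) (P : proc) : proc :=
  match C with
  | CHole => P
  | CAmb n C => PAmb n (fill C P)
  | CAct M C => PAct M (fill C P)
  | CRes n C => PRes n (fill C P)
  | CParL C Q => PPar (fill C P) Q
  | CParR Q C => PPar Q (fill C P)
  end.

Definition bs_bisimulation (Rel : proc -> proc -> Prop) : Prop :=
  (forall P Q, Rel P Q -> Rel Q P) /\
  (forall P Q, Rel P Q ->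
     (forall C n, barb (fill C P) n -> barb (fill C Q) n) /\
     (forall C P', red (fill C P) P' ->
        exists Q', red (fill C Q) Q' /\ Rel P' Q')).

Definition bs_bisim (P Q : proc) : Prop :=
  exists Rel, bs_bisimulation Rel /\ Rel P Q.

(* The M_I transition with label  - | open n.T1  (rule CoOpen instantiated) *)
Definition trans_coopen (P : proc) (n : name) (T1 : proc) (P' : proc) : Prop :=
  exists A P1 P2,
    scong P (nus A (PPar (PAmb n P1) P2)) /\
    ~ In n A /\
    (forall a, In a A -> ~ In a (fn T1)) /\
    scong P' (nus A (PPar (PPar P1 T1) P2)).

(* Main.v *)
Require Import Defs.
From Stdlib Require Import List Arith Lia Bool.
Import ListNotations.


Lemma in_rem (x y : name) l : In x (remove Nat.eq_dec y l) <-> In x l /\ x <> y.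
Proof. split. apply in_remove. intros [H1 H2]. apply in_in_remove; auto. Qed.

Lemma swap_name_inv a b x : swap_name a b (swap_name a b x) = x.
Proof. unfold swap_name.
  destruct (Nat.eqb_spec x a) as [->|Ha].
  - rewrite Nat.eqb_refl. destruct (Nat.eqb_spec b a); subst; auto; try now rewrite Nat.eqb_refl.
  - destruct (Nat.eqb_spec x b) as [->|Hb].
    + rewrite Nat.eqb_refl. auto.
    + apply Nat.eqb_neq in Ha, Hb. now rewrite Ha, Hb.
Qed.

Lemma swap_name_inj a b x y : swap_name a b x = swap_name a b y -> x = y.
Proof. intro H. rewrite <- (swap_name_inv a b x), <- (swap_name_inv a b y), H. auto. Qed.

Lemma swap_name_eq a b x y : swap_name a b x = y <-> x = swap_name a b y.
Proof. split; intro H; subst. now rewrite swap_name_inv. now rewrite swap_name_inv. Qed.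

Lemma swap_name_other a b x : x <> a -> x <> b -> swap_name a b x = x.
Proof. unfold swap_name; intros; destruct (Nat.eqb_spec x a); destruct (Nat.eqb_spec x b); congruence. Qed.

Lemma swap_name_l a b : swap_name a b a = b.
Proof. unfold swap_name; now rewrite Nat.eqb_refl. Qed.
Lemma swap_name_r a b : swap_name a b b = a.
Proof. unfold swap_name. destruct (Nat.eqb_spec b a); subst; auto. now rewrite Nat.eqb_refl. Qed.

Lemma swap_name_eqb a b x y : Nat.eqb (swap_name a b x) (swap_name a b y) = Nat.eqb x y.
Proof. destruct (Nat.eqb_spec x y); subst. apply Nat.eqb_refl.
  apply Nat.eqb_neq. intro H. apply n. eapply swap_name_inj; eauto. Qed.

Lemma swap_name_same a x : swap_name a a x = x.
Proof. unfold swap_name. destruct (Nat.eqb_spec x a); subst; auto. Qed.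

Lemma swap_cap_name a b M : fn_cap (swap_cap a b M) = map (swap_name a b) (fn_cap M).
Proof. destruct M; reflexivity. Qed.

Lemma in_fn_cap_swap a b M x : In x (fn_cap (swap_cap a b M)) <-> In (swap_name a b x) (fn_cap M).
Proof. destruct M; simpl; rewrite !swap_name_eq; intuition. Qed.

Lemma fn_swap a b P x : In x (fn (swap a b P)) <-> In (swap_name a b x) (fn P).
Proof.
  revert x; induction P; intro x; simpl.
  - tauto.
  - rewrite IHP, swap_name_eq. tauto.
  - rewrite !in_app_iff, IHP, in_fn_cap_swap. tauto.
  - rewrite !in_rem, IHP. split; intros [H1 H2]; split; auto; intro E; apply H2.
    + subst; auto. now rewrite swap_name_inv.
    + rewrite E. now rewrite swap_name_inv in *.
  - rewrite !in_app_iff, IHP1, IHP2. tauto.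
Qed.

Lemma swap_swap a b P : swap a b (swap a b P) = P.
Proof. induction P; simpl; try rewrite IHP; try rewrite IHP1, IHP2; try rewrite swap_name_inv; auto.
  destruct c; simpl; rewrite swap_name_inv; auto. Qed.

Lemma swap_same a P : swap a a P = P.
Proof. induction P; simpl; try rewrite IHP; try rewrite IHP1, IHP2; try rewrite swap_name_same; auto.
  destruct c; simpl; rewrite swap_name_same; auto. Qed.

Lemma swap_nus a b A Z : swap a b (nus A Z) = nus (map (swap_name a b) A) (swap a b Z).
Proof. induction A; simpl; congruence. Qed.

Lemma fn_scong P Q : scong P Q -> forall x, In x (fn P) <-> In x (fn Q).
Proof.
  induction 1; intro x; simpl in *; try rewrite !in_app_iff in *; try rewrite !in_rem in *;
   try rewrite !in_app_iff in *; try (rewrite IHscong); try tauto.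
  - rewrite IHscong1; auto.
  - simpl; tauto.
  - split. intros [[A|A] B]; auto. intros [A|[A B]]; auto. split; auto. intro; subst; tauto.
  - destruct (Nat.eq_dec n m); [congruence|]. simpl. rewrite in_rem. intuition.
  - split. intros [[A|A] B]; auto. intros [A|[A B]]; auto. split; auto. intro; subst; tauto.
  - rewrite fn_swap. destruct (Nat.eq_dec x m). subst. split. intros [A B]; tauto. intros [A B]; tauto.
    destruct (Nat.eq_dec x n). subst. rewrite swap_name_l. split; intros [A B]. tauto. tauto.
    rewrite swap_name_other; auto. tauto.
Qed.


Fixpoint ugx (d : bool) (P : proc) : list name :=
  match P with
  | PNil => []
  | PAmb n Q => n :: (if d then ugx d Q else [])
  | PAct _ _ => []
  | PRes n Q => remove Nat.eq_dec n (ugx d Q)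
  | PPar P1 P2 => ugx d P1 ++ ugx d P2
  end.

Lemma ugx_fn d P x : In x (ugx d P) -> In x (fn P).
Proof. induction P; simpl; rewrite ?in_rem, ?in_app_iff; intuition.
  destruct d; simpl in *; intuition. Qed.

Lemma ug_dug P x : In x (ugx false P) -> In x (ugx true P).
Proof. induction P; simpl; try rewrite !in_rem; try rewrite !in_app_iff; intuition. Qed.

Lemma ugx_swap d a b P x : In x (ugx d (swap a b P)) <-> In (swap_name a b x) (ugx d P).
Proof.
  revert x; induction P; intro x; simpl.
  - tauto.
  - rewrite swap_name_eq. destruct d; simpl; [rewrite IHP|]; tauto.
  - tauto.
  - rewrite !in_rem, IHP. split; intros [H1 H2]; split; auto; intro E; apply H2.
    + subst; auto. now rewrite swap_name_inv.
    + rewrite E. now rewrite swap_name_inv in *.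
  - rewrite !in_app_iff, IHP1, IHP2. tauto.
Qed.

Lemma ugx_scong d P Q : scong P Q -> forall x, In x (ugx d P) <-> In x (ugx d Q).
Proof.
  induction 1; intro x; simpl in *; try rewrite !in_app_iff in *; try rewrite !in_rem in *;
   try rewrite !in_app_iff in *; try tauto.
  - symmetry; auto.
  - rewrite IHscong1; auto.
  - destruct d; simpl; try rewrite IHscong; tauto.
  - rewrite IHscong; tauto.
  - rewrite IHscong; tauto.
  - rewrite IHscong; tauto.
  - simpl; tauto.
  - split. intros [[A|A] B]; auto. intros [A|[A B]]; auto. split; auto. intro; subst.
    apply H. eapply ugx_fn; eauto.
  - destruct (Nat.eq_dec n m); [congruence|]. simpl. destruct d; simpl; rewrite ?in_rem; intuition.
  - rewrite ugx_swap. destruct (Nat.eq_dec x m). subst. split. intros [A B].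
    destruct (Nat.eq_dec m n). subst; tauto. exfalso. apply H; eapply ugx_fn; eauto.  tauto.
    destruct (Nat.eq_dec x n). subst. rewrite swap_name_l. split; intros [A B]. tauto.
    exfalso; apply H; eapply ugx_fn; eauto.
    rewrite swap_name_other; auto. tauto.
Qed.


Definition cname (M : cap) : name := match M with CIn n | COut n | COpen n => n end.
Definition cpos (M : cap) : nat := match M with CIn _ => 1 | COut _ => 2 | COpen _ => 3 end.

Fixpoint cnt (w : nat -> nat) (k : name) (P : proc) : nat :=
  match P with
  | PNil => 0
  | PAmb n Q => (if Nat.eqb n k then w 0 else 0) + cnt w k Q
  | PAct M Q => (if Nat.eqb (cname M) k then w (cpos M) else 0) + cnt w k Q
  | PRes n Q => if Nat.eqb n k then 0 else cnt w k Q
  | PPar P1 P2 => cnt w k P1 + cnt w k P2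
  end.

Lemma swap_eqb_l a b x y : Nat.eqb (swap_name a b x) y = Nat.eqb x (swap_name a b y).
Proof. rewrite <- (swap_name_inv a b y) at 1. apply swap_name_eqb. Qed.

Lemma cname_swap a b M : cname (swap_cap a b M) = swap_name a b (cname M).
Proof. destruct M; auto. Qed.
Lemma cpos_swap a b M : cpos (swap_cap a b M) = cpos M.
Proof. destruct M; auto. Qed.
Lemma fn_cap_cname M : fn_cap M = [cname M].
Proof. destruct M; auto. Qed.

Lemma cnt_swap w a b k P : cnt w k (swap a b P) = cnt w (swap_name a b k) P.
Proof. induction P; simpl; rewrite ?cname_swap, ?cpos_swap, ?swap_eqb_l, ?IHP, ?IHP1, ?IHP2; auto. Qed.

Lemma cnt_nofree w k P : ~ In k (fn P) -> cnt w k P = 0.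
Proof. induction P; simpl; intro H.
  - auto.
  - destruct (Nat.eqb_spec n k); subst; intuition.
  - rewrite in_app_iff, fn_cap_cname in H. simpl in H. destruct (Nat.eqb_spec (cname c) k); intuition.
  - destruct (Nat.eqb_spec n k); auto. apply IHP. intro; apply H. apply in_rem; auto.
  - rewrite in_app_iff in H. rewrite IHP1, IHP2; intuition.
Qed.

Lemma cnt_pos w k P : (forall i, i <= 3 -> 1 <= w i) -> In k (fn P) -> 1 <= cnt w k P.
Proof. intro Hw. induction P; simpl; intro H; rewrite ?in_app_iff, ?in_rem in H.
  - destruct H.
  - destruct H. subst. rewrite Nat.eqb_refl. specialize (Hw 0); lia. specialize (IHP H); lia.
  - rewrite fn_cap_cname in H. simpl in H. destruct H as [[H|H]|H].
    subst. rewrite Nat.eqb_refl. assert (cpos c <= 3) by (destruct c; simpl; lia). specialize (Hw _ H); lia.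
    destruct H. specialize (IHP H); lia.
  - destruct H. destruct (Nat.eqb_spec n k); subst; auto. congruence.
  - destruct H as [H|H]; [specialize (IHP1 H)|specialize (IHP2 H)]; lia.
Qed.

Lemma cnt_add w1 w2 w k P : (forall i, w i = w1 i + w2 i) -> cnt w k P = cnt w1 k P + cnt w2 k P.
Proof. intro Hw. induction P; simpl; rewrite ?Hw; try lia.
  - destruct (Nat.eqb n k); lia.
  - destruct (Nat.eqb (cname c) k); lia.
  - destruct (Nat.eqb n k); lia.
Qed.

Lemma cnt_scong w k P Q : scong P Q -> cnt w k P = cnt w k Q.
Proof.
  induction 1; simpl; try lia.
  - destruct (Nat.eqb n k); lia.
  - destruct (Nat.eqb n k); destruct (Nat.eqb m k); lia.
  - destruct (Nat.eqb_spec n k); subst; auto. rewrite cnt_nofree; auto.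
  - destruct (Nat.eqb_spec n k); destruct (Nat.eqb_spec m k); subst; try congruence; lia.
  - destruct (Nat.eqb_spec n k); subst; auto. rewrite fn_cap_cname in H. simpl in H.
    destruct (Nat.eqb_spec (cname M) k); subst; intuition.
  - rewrite cnt_swap. destruct (Nat.eqb_spec n k); destruct (Nat.eqb_spec m k); subst; auto.
    + rewrite swap_name_l. rewrite cnt_nofree; auto.
    + rewrite cnt_nofree; auto.
    + rewrite swap_name_other; auto.
Qed.

Fixpoint emp (P : proc) : Prop :=
  match P with
  | PNil => True
  | PAmb _ _ => False
  | PAct _ _ => False
  | PRes _ Q => emp Q
  | PPar P1 P2 => emp P1 /\ emp P2
  end.

Fixpoint Kgood (k : name) (P : proc) : Prop :=
  match P with
  | PNil => True
  | PAmb n Q => (n = k -> emp Q) /\ Kgood k Q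
  | PAct _ Q => Kgood k Q
  | PRes n Q => n = k \/ Kgood k Q
  | PPar P1 P2 => Kgood k P1 /\ Kgood k P2
  end.

Lemma emp_swap a b P : emp (swap a b P) <-> emp P.
Proof. induction P; simpl; tauto. Qed.

Lemma emp_scong P Q : scong P Q -> (emp P <-> emp Q).
Proof. induction 1; simpl; try tauto. rewrite emp_swap; tauto. Qed.

Lemma Kgood_swap a b k P : Kgood (swap_name a b k) (swap a b P) <-> Kgood k P.
Proof. induction P; simpl; rewrite ?emp_swap, ?IHP, ?IHP1, ?IHP2; try tauto.
  - split; intros [A B]; split; auto; intro E; apply A; subst; auto.
    apply swap_name_inj in E; auto.
  - split; intros [A|A]; auto; left. eapply swap_name_inj; eauto.
Qed.

Lemma Kgood_nofree k P : ~ In k (fn P) -> Kgood k P.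
Proof. induction P; simpl; intro H.
  - auto.
  - split; [intro; subst; tauto| apply IHP; tauto].
  - apply IHP. rewrite in_app_iff in H; tauto.
  - destruct (Nat.eq_dec n k); auto. right; apply IHP. intro; apply H, in_rem; auto.
  - rewrite in_app_iff in H. split; [apply IHP1|apply IHP2]; tauto.
Qed.

Lemma Kgood_scong k P Q : scong P Q -> (Kgood k P <-> Kgood k Q).
Proof.
  induction 1; simpl; try tauto.
  - rewrite (emp_scong _ _ H). tauto.
  - split. intros [A|[A B]]; subst. split; auto. apply Kgood_nofree; auto. tauto.
    intros [A [B|B]]; auto.
  - split. intros [A|[A B]]; subst; split; auto. intro; congruence.
    intros [A [B|B]]; auto.
  - destruct (Nat.eq_dec m k) as [->|Hm]. split; intros; auto; right; apply Kgood_nofree; auto.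
    destruct (Nat.eq_dec n k) as [->|Hn].
    + assert (E := Kgood_swap k m m P). rewrite swap_name_r in E. rewrite E.
      split; intros; auto. right. apply Kgood_nofree; auto.
    + assert (E := Kgood_swap n m k P). rewrite swap_name_other in E by auto. rewrite E. tauto.
Qed.


Definition wA (i : nat) := if Nat.eqb i 0 then 1 else 0.
Definition wIO (i : nat) := if Nat.eqb i 1 then 1 else if Nat.eqb i 2 then 1 else 0.
Definition wO (i : nat) := if Nat.eqb i 3 then 1 else 0.
Definition wT (i : nat) := wA i + wIO i + wO i.

Lemma wT_pos i : i <= 3 -> 1 <= wT i.
Proof. intro; unfold wT, wA, wIO, wO. destruct i as [|[|[|[|]]]]; simpl; lia. Qed.

Lemma cntT_split k P : cnt wT k P = cnt wA k P + cnt wIO k P + cnt wO k P.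
Proof. rewrite (cnt_add (fun i => wA i + wIO i) wO wT) by (intro; unfold wT; lia).
  rewrite (cnt_add wA wIO (fun i => wA i + wIO i)) by (intro; lia). lia. Qed.

Lemma cntT_zero k P : cnt wT k P = 0 -> ~ In k (fn P).
Proof. intros H H'. pose proof (cnt_pos wT k P wT_pos H'). lia. Qed.

Definition adj (a : name) (o : option (option name)) :=
  match o with Some (Some m) => if Nat.eqb m a then Some None else o | _ => o end.
Definition ofirst {A} (o1 o2 : option A) := match o1 with None => o2 | _ => o1 end.
Definition omap2 (f : name -> name) (o : option (option name)) :=
  match o with Some (Some m) => Some (Some (f m)) | _ => o end.

Fixpoint phi (k : name) (P : proc) : option (option name) :=
  match P with
  | PAct (COpen m) U => if in_dec Nat.eq_dec k (fn U) then Some (Some m) else None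
  | PRes a Q => if Nat.eqb a k then None else adj a (phi k Q)
  | PPar P1 P2 => ofirst (phi k P1) (phi k P2)
  | _ => None
  end.

Lemma phi_nofree k P : ~ In k (fn P) -> phi k P = None.
Proof. induction P; simpl; intro H; auto.
  - destruct c; auto. destruct (in_dec Nat.eq_dec k (fn P)); auto. exfalso; apply H; simpl; auto.
  - destruct (Nat.eqb_spec n k); auto. rewrite IHP; auto. intro; apply H, in_rem; auto.
  - rewrite in_app_iff in H. rewrite IHP1, IHP2; auto.
Qed.

Lemma phi_fn k P o : phi k P = Some o -> In k (fn P).
Proof. revert o; induction P; simpl; intros o H; try discriminate.
  - destruct c; try discriminate. destruct (in_dec Nat.eq_dec k (fn P)); try discriminate. simpl; auto.
  - destruct (Nat.eqb_spec n k); try discriminate. apply in_rem; split; auto.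
    destruct (phi k P) as [[m|]|] eqn:E; simpl in H; try discriminate; eauto.
  - rewrite in_app_iff. destruct (phi k P1) eqn:E; simpl in H; eauto.
Qed.

Lemma phi_fn2 k P m : phi k P = Some (Some m) -> In m (fn P).
Proof. induction P; simpl; intro H; try discriminate.
  - destruct c; try discriminate. destruct (in_dec Nat.eq_dec k (fn P)); try discriminate. simpl; left; congruence.
  - destruct (Nat.eqb_spec n k); try discriminate. apply in_rem.
    destruct (phi k P) as [[m'|]|] eqn:E; simpl in H; try discriminate.
    destruct (Nat.eqb_spec m' n); try discriminate. inversion H; subst. auto.
  - rewrite in_app_iff. destruct (phi k P1) eqn:E; simpl in H; subst; eauto.
Qed.

Lemma phi_swap a b k P : phi (swap_name a b k) (swap a b P) = omap2 (swap_name a b) (phi k P).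
Proof. induction P; simpl; auto.
  - destruct c; simpl; auto.
    destruct (in_dec Nat.eq_dec (swap_name a b k) (fn (swap a b P)));
    destruct (in_dec Nat.eq_dec k (fn P)); simpl; auto; exfalso.
    + rewrite fn_swap, swap_name_inv in i; auto.
    + apply n0; rewrite fn_swap, swap_name_inv; auto.
  - rewrite swap_name_eqb. destruct (Nat.eqb n k); auto. rewrite IHP.
    destruct (phi k P) as [[m|]|]; simpl; auto. rewrite swap_name_eqb. destruct (Nat.eqb m n); auto.
  - rewrite IHP1, IHP2. destruct (phi k P1) as [[m|]|]; simpl; auto.
Qed.

Lemma phi_scong k P Q : scong P Q -> cnt wT k P <= 1 -> phi k P = phi k Q.
Proof.
  induction 1; simpl; intro Hc; auto.
  - symmetry; apply IHscong. rewrite (cnt_scong _ _ _ _ H); auto.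
  - rewrite IHscong1 by auto. apply IHscong2. rewrite <- (cnt_scong _ _ _ _ H); auto.
  - destruct M; auto. destruct (in_dec Nat.eq_dec k (fn P)); destruct (in_dec Nat.eq_dec k (fn Q)); auto;
     exfalso; apply n0; [apply (proj1 (fn_scong _ _ H k))|apply (proj2 (fn_scong _ _ H k))]; auto.
  - destruct (Nat.eqb n k); auto. rewrite IHscong; auto.
  - rewrite IHscong; auto. lia.
  - rewrite IHscong; auto. lia.
  - destruct (phi k P) eqn:E1; destruct (phi k Q) eqn:E2; auto. exfalso.
    apply phi_fn in E1. apply phi_fn in E2. pose proof (cnt_pos wT k P wT_pos E1).
    pose proof (cnt_pos wT k Q wT_pos E2). lia.
  - destruct (phi k P); auto.
  - destruct (phi k P); auto.
  - destruct (Nat.eqb_spec n k); destruct (Nat.eqb_spec m k); auto.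
    destruct (phi k P) as [[x|]|]; simpl; auto.
    destruct (Nat.eqb_spec x m) as [e1|e1]; destruct (Nat.eqb_spec x n) as [e2|e2]; subst; simpl;
      rewrite ?Nat.eqb_refl; auto;
      try (apply Nat.eqb_neq in e1; rewrite e1); try (apply Nat.eqb_neq in e2; rewrite e2); auto.
  - destruct (Nat.eqb_spec n k); subst. rewrite phi_nofree; auto.
    destruct (phi k P) as [[x|]|] eqn:E; simpl; auto.
    destruct (Nat.eqb_spec x n); auto. subst. apply phi_fn2 in E. tauto.
  - destruct (Nat.eqb_spec n k); auto.
  - destruct M; simpl in *; auto; destruct (Nat.eqb_spec n k); auto.
    + subst n. destruct (in_dec Nat.eq_dec k (remove Nat.eq_dec k (fn P))); auto.
      exfalso; eapply remove_In; eauto.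
    + destruct (in_dec Nat.eq_dec k (fn P)); destruct (in_dec Nat.eq_dec k (remove Nat.eq_dec n (fn P))); simpl; auto.
      * destruct (Nat.eqb_spec n0 n); subst; auto. exfalso; apply H; auto.
      * exfalso; apply n2, in_rem; auto.
      * exfalso; apply in_rem in i; tauto.
  - destruct (Nat.eqb_spec n k); destruct (Nat.eqb_spec m k); subst; auto.
    + assert (E := phi_swap k m m P). rewrite swap_name_r in E. rewrite E, phi_nofree; auto.
    + rewrite phi_nofree; auto.
    + assert (E := phi_swap n m k P). rewrite swap_name_other in E by auto. rewrite E.
      destruct (phi k P) as [[x|]|] eqn:E'; simpl; auto.
      destruct (Nat.eqb_spec x n); subst.
      * rewrite swap_name_l, Nat.eqb_refl; auto.
      * rewrite swap_name_other; auto. destruct (Nat.eqb_spec x m); auto. subst.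
        apply phi_fn2 in E'. tauto.
        intro; subst. apply phi_fn2 in E'. tauto.
Qed.


Fixpoint eta (k : name) (P : proc) : proc :=
  match P with
  | PAct (COpen m) U => if in_dec Nat.eq_dec k (fn U) then U else PAct (COpen m) U
  | PRes a Q => if Nat.eqb a k then PRes a Q else PRes a (eta k Q)
  | PPar P1 P2 => PPar (eta k P1) (eta k P2)
  | _ => P
  end.

Fixpoint op (k : name) (P : proc) : proc :=
  match P with
  | PAmb n Q => if Nat.eqb n k then Q else PAmb n Q
  | PAct (COpen m) U => if Nat.eqb m k then U else PAct (COpen m) U
  | PRes a Q => if Nat.eqb a k then PRes a Q else PRes a (op k Q)
  | PPar P1 P2 => PPar (op k P1) (op k P2)
  | _ => P
  end.

Lemma eta_nofree k P : ~ In k (fn P) -> eta k P = P.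
Proof. induction P; simpl; intro H; auto.
  - destruct c; auto. destruct (in_dec Nat.eq_dec k (fn P)); auto. exfalso; apply H; simpl; auto.
  - destruct (Nat.eqb_spec n k); auto. rewrite IHP; auto. intro; apply H, in_rem; auto.
  - rewrite in_app_iff in H. rewrite IHP1, IHP2; auto.
Qed.

Lemma op_nofree k P : ~ In k (fn P) -> op k P = P.
Proof. induction P; simpl; intro H; auto.
  - destruct (Nat.eqb_spec n k); auto. subst; tauto.
  - destruct c; auto. destruct (Nat.eqb_spec n k); auto. subst; simpl in H; tauto.
  - destruct (Nat.eqb_spec n k); auto. rewrite IHP; auto. intro; apply H, in_rem; auto.
  - rewrite in_app_iff in H. rewrite IHP1, IHP2; auto.
Qed.

Lemma eta_fn k P x : In x (fn (eta k P)) -> In x (fn P).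
Proof. induction P; simpl; auto.
  - destruct c; simpl; auto. destruct (in_dec Nat.eq_dec k (fn P)); simpl; auto.
  - destruct (Nat.eqb_spec n k); simpl; auto. rewrite !in_rem; intuition.
  - rewrite !in_app_iff; intuition.
Qed.

Lemma op_fn k P x : In x (fn (op k P)) -> In x (fn P).
Proof. induction P; simpl; auto.
  - destruct (Nat.eqb_spec n k); simpl; auto.
  - destruct c; simpl; auto. destruct (Nat.eqb_spec n k); simpl; auto.
  - destruct (Nat.eqb_spec n k); simpl; auto. rewrite !in_rem; intuition.
  - rewrite !in_app_iff; intuition.
Qed.

Lemma eta_swap a b k P : eta (swap_name a b k) (swap a b P) = swap a b (eta k P).
Proof. induction P; simpl; auto.
  - destruct c; simpl; auto.
    destruct (in_dec Nat.eq_dec (swap_name a b k) (fn (swap a b P)));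
    destruct (in_dec Nat.eq_dec k (fn P)); simpl; auto; exfalso.
    + rewrite fn_swap, swap_name_inv in i; auto.
    + apply n0; rewrite fn_swap, swap_name_inv; auto.
  - rewrite swap_name_eqb. destruct (Nat.eqb n k); simpl; auto. rewrite IHP; auto.
  - rewrite IHP1, IHP2; auto.
Qed.

Lemma op_swap a b k P : op (swap_name a b k) (swap a b P) = swap a b (op k P).
Proof. induction P; simpl; auto.
  - rewrite swap_name_eqb. destruct (Nat.eqb n k); simpl; auto.
  - destruct c; simpl; auto. rewrite swap_name_eqb. destruct (Nat.eqb n k); simpl; auto.
  - rewrite swap_name_eqb. destruct (Nat.eqb n k); simpl; auto. rewrite IHP; auto.
  - rewrite IHP1, IHP2; auto.
Qed.

Lemma fn_nofree_swap k m P : ~ In m (fn P) -> ~ In k (fn (swap k m P)).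
Proof. intros H H'. rewrite fn_swap, swap_name_l in H'. auto. Qed.

Lemma eta_scong k P Q : scong P Q -> scong (eta k P) (eta k Q).
Proof.
  induction 1; simpl.
  - apply sc_refl.
  - apply sc_sym; auto.
  - eapply sc_trans; eauto.
  - apply sc_amb; auto.
  - destruct M; try (apply sc_act; auto).
    destruct (in_dec Nat.eq_dec k (fn P)); destruct (in_dec Nat.eq_dec k (fn Q)); auto.
    + exfalso; apply n0; apply (proj1 (fn_scong _ _ H k)); auto.
    + exfalso; apply n0; apply (proj2 (fn_scong _ _ H k)); auto.
    + apply sc_act; auto.
  - destruct (Nat.eqb n k); apply sc_res; auto.
  - apply sc_parl; auto.
  - apply sc_parr; auto.
  - apply sc_par_comm.
  - apply sc_par_assoc.
  - apply sc_par_nil.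
  - repeat (match goal with |- context[Nat.eqb ?a ?b] => destruct (Nat.eqb_spec a b) end; simpl);
     subst; try congruence; apply sc_res_res.
  - destruct (Nat.eqb_spec n k).
    + subst. rewrite eta_nofree; auto. apply sc_res_par; auto.
    + apply sc_res_par. intro; apply H; eapply eta_fn; eauto.
  - destruct (Nat.eqb n k); apply sc_res_amb; auto.
  - destruct (Nat.eqb_spec n k).
    + subst. destruct M; simpl; try (apply sc_res_act; auto).
      destruct (in_dec Nat.eq_dec k (remove Nat.eq_dec k (fn P))).
      * exfalso; eapply remove_In; eauto.
      * apply sc_res_act; auto.
    + destruct M; simpl; try (apply sc_res_act; auto).
      destruct (in_dec Nat.eq_dec k (fn P)); destruct (in_dec Nat.eq_dec k (remove Nat.eq_dec n (fn P))).
      * apply sc_refl.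
      * exfalso; apply n2, in_rem; auto.
      * exfalso; apply in_rem in i; tauto.
      * apply sc_res_act; auto.
  - destruct (Nat.eqb_spec n k); destruct (Nat.eqb_spec m k); subst.
    + rewrite swap_same. apply sc_refl.
    + rewrite eta_nofree. apply sc_alpha; auto. apply fn_nofree_swap; auto.
    + rewrite eta_nofree by auto. apply sc_alpha; auto.
    + rewrite <- (swap_name_other n m k) at 2 by auto. rewrite eta_swap. apply sc_alpha.
      intro; apply H; eapply eta_fn; eauto.
Qed.

Lemma op_scong k P Q : scong P Q -> scong (op k P) (op k Q).
Proof.
  induction 1; simpl.
  - apply sc_refl.
  - apply sc_sym; auto.
  - eapply sc_trans; eauto.
  - destruct (Nat.eqb n k); auto. apply sc_amb; auto.
  - destruct M; try (apply sc_act; auto).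
    destruct (Nat.eqb n k); auto. apply sc_act; auto.
  - destruct (Nat.eqb n k); apply sc_res; auto.
  - apply sc_parl; auto.
  - apply sc_parr; auto.
  - apply sc_par_comm.
  - apply sc_par_assoc.
  - apply sc_par_nil.
  - repeat (match goal with |- context[Nat.eqb ?a ?b] => destruct (Nat.eqb_spec a b) end; simpl);
     subst; try congruence; apply sc_res_res.
  - destruct (Nat.eqb_spec n k).
    + subst. rewrite op_nofree; auto. apply sc_res_par; auto.
    + apply sc_res_par. intro; apply H; eapply op_fn; eauto.
  - destruct (Nat.eqb_spec n k); destruct (Nat.eqb_spec m k); subst; try congruence.
    + apply sc_res_amb; auto.
    + apply sc_refl.
    + apply sc_res_amb; auto.
  - destruct (Nat.eqb_spec n k).
    + subst. destruct M; simpl; try (apply sc_res_act; auto).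
      destruct (Nat.eqb_spec n k); subst. simpl in H; tauto. apply sc_res_act; auto.
    + destruct M; simpl; try (apply sc_res_act; auto).
      destruct (Nat.eqb_spec n1 k). apply sc_refl. apply sc_res_act; auto.
  - destruct (Nat.eqb_spec n k); destruct (Nat.eqb_spec m k); subst.
    + rewrite swap_same. apply sc_refl.
    + rewrite op_nofree. apply sc_alpha; auto. apply fn_nofree_swap; auto.
    + rewrite op_nofree by auto. apply sc_alpha; auto.
    + rewrite <- (swap_name_other n m k) at 2 by auto. rewrite op_swap. apply sc_alpha.
      intro; apply H; eapply op_fn; eauto.
Qed.


Definition fresh (l : list name) : name := S (fold_right max 0 l).
Lemma fresh_not_in l : ~ In (fresh l) l.
Proof. unfold fresh. assert (forall x, In x l -> x <= fold_right max 0 l).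
  { induction l; simpl; intros x H; [tauto|]. destruct H; subst; [lia|]. specialize (IHl x H); lia. }
  intro H'. apply H in H'. lia. Qed.

Lemma sc_nus A P Q : scong P Q -> scong (nus A P) (nus A Q).
Proof. induction A; simpl; auto using sc_res. Qed.

Lemma fn_nus A Z x : In x (fn (nus A Z)) <-> In x (fn Z) /\ ~ In x A.
Proof. induction A; simpl. tauto. rewrite in_rem, IHA. intuition. Qed.

Lemma ugx_nus d A Z x : In x (ugx d (nus A Z)) <-> In x (ugx d Z) /\ ~ In x A.
Proof. induction A; simpl. tauto. rewrite in_rem, IHA. intuition. Qed.

Lemma cnt_nus w k A Z : ~ In k A -> cnt w k (nus A Z) = cnt w k Z.
Proof. induction A; simpl; auto. intro H. destruct (Nat.eqb_spec a k); subst; intuition. Qed.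

Lemma Kgood_nus k A Z : Kgood k Z -> Kgood k (nus A Z).
Proof. induction A; simpl; auto. Qed.

Lemma op_nus k A Z : ~ In k A -> op k (nus A Z) = nus A (op k Z).
Proof. induction A; simpl; auto. intro H. destruct (Nat.eqb_spec a k); subst; intuition. congruence. Qed.

Lemma eta_nus k A Z : ~ In k A -> eta k (nus A Z) = nus A (eta k Z).
Proof. induction A; simpl; auto. intro H. destruct (Nat.eqb_spec a k); subst; intuition. congruence. Qed.

Lemma nus_extrude A Z R : (forall x, In x A -> ~ In x (fn R)) ->
  scong (PPar (nus A Z) R) (nus A (PPar Z R)).
Proof. induction A; simpl; intro H. apply sc_refl.
  eapply sc_trans. apply sc_par_comm.
  eapply sc_trans. apply sc_sym, sc_res_par. apply H; auto.
  apply sc_res. eapply sc_trans. apply sc_par_comm. apply IHA. auto.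
Qed.

Lemma red_nus A P Q : red P Q -> red (nus A P) (nus A Q).
Proof. induction A; simpl; auto using r_res. Qed.

Lemma fill_scong C P Q : scong P Q -> scong (fill C P) (fill C Q).
Proof. induction C; simpl; intro H; auto using sc_amb, sc_act, sc_res, sc_parl, sc_parr. Qed.

Lemma barb_scong P Q n : scong P Q -> barb P n -> barb Q n.
Proof. intros H [A [Q0 [R [H1 H2]]]]. exists A, Q0, R. split; auto. eapply sc_trans; eauto using sc_sym. Qed.

Lemma barb_ug P n : barb P n -> In n (ugx false P).
Proof. intros [A [Q0 [R [H1 H2]]]]. apply (ugx_scong false _ _ H1). apply ugx_nus. simpl; auto. Qed.

Lemma in_map_swap a b A y : In y (map (swap_name a b) A) <-> In (swap_name a b y) A.
Proof. rewrite in_map_iff. split.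
  - intros [z [<- Hz]]. now rewrite swap_name_inv.
  - intro H. exists (swap_name a b y). rewrite swap_name_inv; auto.
Qed.

Lemma ug_barb_gen P x L : In x (ugx false P) ->
  exists A Q R, scong P (nus A (PPar (PAmb x Q) R)) /\ ~ In x A /\ (forall y, In y A -> ~ In y L).
Proof.
  revert L; induction P; simpl; intros L H; try tauto.
  - destruct H as [H|H]; [subst|tauto]. exists [], P, PNil. simpl. split; auto. apply sc_sym, sc_par_nil.
  - apply in_rem in H as [H Hx].
    destruct (exist (fun z => ~ In z (L ++ fn P ++ [x; n])) _ (fresh_not_in (L ++ fn P ++ [x; n]))) as [a' Ha'].
    rewrite !in_app_iff in Ha'. simpl in Ha'.
    destruct (IHP (a' :: L) H) as [A [Q [R [H1 [H2 H3]]]]].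
    exists (a' :: map (swap_name n a') A), (swap n a' Q), (swap n a' R).
    split; [|split].
    + eapply sc_trans. apply sc_res, H1.
      eapply sc_trans. apply sc_alpha with (m := a').
      { intro Hf. apply (fn_scong _ _ H1) in Hf. tauto. }
      rewrite swap_nus. simpl. rewrite swap_name_other by (auto; intro; subst; tauto). apply sc_refl.
    + simpl. rewrite in_map_swap. rewrite swap_name_other by (auto; intro; subst; tauto).
      intros [E|E]; [subst; tauto|tauto].
    + intros y Hy. simpl in Hy. destruct Hy as [<-|Hy]; [tauto|].
      rewrite in_map_swap in Hy. unfold swap_name in Hy.
      destruct (Nat.eqb_spec y n). apply H3 in Hy. simpl in Hy. tauto.
      destruct (Nat.eqb_spec y a'). subst. apply H3 in Hy. simpl in Hy. tauto.
      apply H3 in Hy. simpl in Hy. tauto.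
  - rewrite in_app_iff in H. destruct H as [H|H].
    + destruct (IHP1 (L ++ fn P2) H) as [A [Q [R [H1 [H2 H3]]]]].
      exists A, Q, (PPar R P2). split; [|split]; auto.
      * eapply sc_trans. apply sc_parl, H1. eapply sc_trans. apply nus_extrude.
        { intros y Hy. specialize (H3 y Hy). rewrite in_app_iff in H3. tauto. }
        apply sc_nus. apply sc_par_assoc.
      * intros y Hy. specialize (H3 y Hy). rewrite in_app_iff in H3. tauto.
    + destruct (IHP2 (L ++ fn P1) H) as [A [Q [R [H1 [H2 H3]]]]].
      exists A, Q, (PPar R P1). split; [|split]; auto.
      * eapply sc_trans. apply sc_par_comm. eapply sc_trans. apply sc_parl, H1. eapply sc_trans. apply nus_extrude.
        { intros y Hy. specialize (H3 y Hy). rewrite in_app_iff in H3. tauto. }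
        apply sc_nus. apply sc_par_assoc.
      * intros y Hy. specialize (H3 y Hy). rewrite in_app_iff in H3. tauto.
Qed.

Lemma ug_barb P x : In x (ugx false P) -> barb P x.
Proof. intro H. destruct (ug_barb_gen P x [] H) as [A [Q [R [H1 [H2 _]]]]]. exists A, Q, R; auto. Qed.


Lemma ug_cntA k P : In k (ugx false P) -> 1 <= cnt wA k P.
Proof. induction P; simpl; intro H; try tauto.
  - destruct H as [H|H]; [subst|tauto]. rewrite Nat.eqb_refl. unfold wA; simpl; lia.
  - apply in_rem in H as [H1 H2]. apply Nat.eqb_neq in H2. rewrite Nat.eqb_sym, H2; auto.
  - rewrite in_app_iff in H. destruct H as [H|H]; [specialize (IHP1 H)|specialize (IHP2 H)]; lia.
Qed.

Lemma S2 k : forall Y W, red Y W -> Kgood k Y -> cnt wA k Y <= 1 -> cnt wO k Y <= 1 ->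
  cnt wIO k Y = 0 -> In k (ugx false Y) -> ~ In k (ugx false W) ->
  1 <= cnt wO k Y /\ scong W (op k Y).
Proof.
  induction 1; simpl; intros HK HA HO HIO Hin Hout.
  -
    destruct Hin as [<-|[<-|[]]].
    + destruct HK as [[HK _] _]. exfalso; apply HK; auto.
    + rewrite Nat.eqb_refl in HIO. unfold wIO in HIO; simpl in HIO. lia.
  - destruct Hin as [<-|[]]. rewrite Nat.eqb_refl in HIO. unfold wIO in HIO; simpl in HIO. lia.
  - destruct Hin as [<-|[]]. rewrite !Nat.eqb_refl. split.
    unfold wO; simpl; lia. apply sc_refl.
  - apply in_rem in Hin as [Hin Hn]. apply Nat.eqb_neq in Hn as Hn'. rewrite Nat.eqb_sym in Hn'.
    rewrite Hn' in *. destruct HK as [HK|HK]; [congruence|].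
    destruct IHred as [H1 H2]; auto. intro; apply Hout, in_rem; auto.
    split; auto. apply sc_res; auto.
  - destruct Hin as [<-|[]]. exfalso; apply Hout; simpl; auto.
  - rewrite in_app_iff in Hin, Hout. destruct HK as [HK1 HK2].
    assert (Hin' : In k (ugx false P)) by (destruct Hin; tauto).
    destruct IHred as [H1 H2]; try lia; auto.
    pose proof (ug_cntA k P Hin').
    assert (HR : cnt wT k R = 0) by (rewrite cntT_split; lia).
    rewrite (op_nofree k R) by (apply cntT_zero; auto).
    split; [lia|]. apply sc_parl; auto.
  - rewrite (cnt_scong wA _ _ _ H) in HA. rewrite (cnt_scong wO _ _ _ H) in HO.
    rewrite (cnt_scong wIO _ _ _ H) in HIO.
    rewrite (Kgood_scong _ _ _ H) in HK. rewrite (ugx_scong _ _ _ H) in Hin.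
    rewrite <- (ugx_scong _ _ _ H1) in Hout.
    destruct IHred as [Ha Hb]; auto. split. rewrite (cnt_scong _ _ _ _ H); auto.
    eapply sc_trans. apply sc_sym, H1. eapply sc_trans. apply Hb. apply op_scong, sc_sym, H.
Qed.


Lemma ug_fn_cnt k P : In k (fn P) -> 1 <= cnt wT k P.
Proof. apply cnt_pos. apply wT_pos. Qed.

Lemma S1 k : forall Y X, red Y X -> forall L, Kgood k Y -> cnt wT k Y <= 1 ->
  ~ In k (ugx true Y) -> In k (ugx false X) ->
  exists m A V U R,
    (forall y, In y A -> ~ In y L) /\ ~ In k A /\
    phi k Y = Some (if in_dec Nat.eq_dec m A then None else Some m) /\
    scong X (nus A (PPar (PPar V U) R)) /\
    scong (op k (eta k Y)) (nus A (PPar (PPar (PAmb m V) (op k U)) R)) /\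
    cnt wT k V = 0 /\ cnt wT k R = 0 /\ cnt wT k U <= 1 /\ In k (ugx false U) /\
    Kgood k U /\ m <> k.
Proof.
  induction 1; simpl; intros L HK HC Hdug Hin.
  -
    exfalso. destruct Hin as [<-|[]]. apply Hdug. rewrite ?in_app_iff; simpl; auto.
  - exfalso. destruct Hin as [<-|[<-|[]]]; apply Hdug; simpl;
    rewrite ?in_app_iff; simpl; auto.
  -
    rewrite in_app_iff in Hin. destruct Hin as [Hin|Hin].
    2:{ exfalso; apply Hdug. simpl. right. apply ug_dug; auto. }
    assert (HkP : In k (fn P)) by (eapply ugx_fn; eauto).
    pose proof (ug_fn_cnt k P HkP).
    destruct (Nat.eqb_spec n k). subst. unfold wT, wA, wIO, wO in HC; simpl in HC; lia.
    destruct (in_dec Nat.eq_dec k (fn P)); [|tauto].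
    exists n, [], Q, P, PNil. simpl. destruct HK as [HK1 [_ HK2]].
    repeat split; auto; try lia.
    + apply sc_sym. eapply sc_trans. apply sc_par_nil. apply sc_par_comm.
    + apply sc_sym. eapply sc_trans. apply sc_par_nil. apply sc_par_comm.
  -
    apply in_rem in Hin as [Hin Hnk].
    assert (Hnk' : Nat.eqb n k = false) by (apply Nat.eqb_neq; auto).
    rewrite Hnk' in *. destruct HK as [HK|HK]; [congruence|].
    assert (Hdug' : ~ In k (ugx true P)) by (intro; apply Hdug, in_rem; auto).
    destruct (exist (fun z => ~ In z (L ++ fn P ++ fn P' ++ [k; n])) _
       (fresh_not_in (L ++ fn P ++ fn P' ++ [k; n]))) as [a' Ha'].
    rewrite !in_app_iff in Ha'. simpl in Ha'.
    destruct (IHred (a' :: L) HK HC Hdug' Hin) as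
      [m [A [V [U [R [H1 [H2 [H3 [H4 [H5 [H6 [H7 [H8 [H9 [H10 H11]]]]]]]]]]]]]]].
    assert (Hsk : (swap_name n a') k = k) by (apply swap_name_other; intro; subst; tauto).
    assert (Ha'A : ~ In a' A) by (intro Hx; apply H1 in Hx; simpl in Hx; tauto).
    assert (Hma' : m <> a').
    { intro; subst m. destruct (in_dec Nat.eq_dec a' A); [tauto|].
      apply phi_fn2 in H3; tauto. }
    exists ((swap_name n a') m), (a' :: map (swap_name n a') A), (swap n a' V), (swap n a' U), (swap n a' R).
    repeat split.
    + intros y Hy. destruct Hy as [<-|Hy]; [tauto|].
      rewrite in_map_swap in Hy. unfold swap_name in Hy.
      destruct (Nat.eqb_spec y n). apply H1 in Hy. simpl in Hy. tauto.
      destruct (Nat.eqb_spec y a'). subst. apply H1 in Hy. simpl in Hy. tauto.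
      apply H1 in Hy. simpl in Hy. tauto.
    + intros [Hx|Hx]. subst; tauto. rewrite in_map_swap in Hx. rewrite Hsk in Hx. tauto.
    + rewrite H3. destruct (in_dec Nat.eq_dec m A) as [Hm|Hm].
      * unfold adj. destruct (in_dec Nat.eq_dec ((swap_name n a') m) (a' :: map (swap_name n a') A)) as [Hi|Hi]; auto.
        exfalso; apply Hi; right; apply in_map; auto.
      * unfold adj. destruct (Nat.eqb_spec m n).
        -- subst. destruct (in_dec Nat.eq_dec (swap_name n a' n) (a' :: map (swap_name n a') A)) as [Hi|Hi]; auto.
           exfalso; apply Hi; left; rewrite swap_name_l; auto.
        -- assert (Hsm : (swap_name n a') m = m) by (apply swap_name_other; auto).
           rewrite Hsm. destruct (in_dec Nat.eq_dec m (a' :: map (swap_name n a') A)); auto.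
           exfalso. destruct i as [i|i]; [congruence|]. rewrite in_map_swap in i.
           rewrite Hsm in i; tauto.
    + eapply sc_trans. apply sc_res, H4. eapply sc_trans. apply sc_alpha with (m := a').
      { intro Hf. apply (fn_scong _ _ H4) in Hf. tauto. }
      rewrite swap_nus. apply sc_refl.
    + simpl. rewrite Hnk'. eapply sc_trans. apply sc_res, H5. eapply sc_trans. apply sc_alpha with (m := a').
      { intro Hf. apply (fn_scong _ _ H5) in Hf. apply op_fn, eta_fn in Hf. tauto. }
      rewrite swap_nus. simpl. rewrite <- op_swap. rewrite Hsk. apply sc_refl.
    + rewrite cnt_swap. rewrite Hsk. auto.
    + rewrite cnt_swap. rewrite Hsk. auto.
    + rewrite cnt_swap. rewrite Hsk. auto.
    + rewrite ugx_swap. rewrite Hsk. auto.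
    + rewrite <- Hsk at 1. rewrite Kgood_swap. auto.
    + intro Hx. apply H11. rewrite <- Hsk in Hx. eapply swap_name_inj; eauto.
  - exfalso. destruct Hin as [<-|[]]. apply Hdug; simpl; auto.
  -
    rewrite in_app_iff in Hin. destruct Hin as [Hin|Hin].
    2:{ exfalso; apply Hdug. rewrite in_app_iff. right. apply ug_dug; auto. }
    rewrite in_app_iff in Hdug. destruct HK as [HK1 HK2].
    destruct (IHred (L ++ fn R) HK1 ltac:(lia) ltac:(tauto) Hin) as
      [m [A [V [U [R0 [H1 [H2 [H3 [H4 [H5 [H6 [H7 [H8 [H9 [H10 H11]]]]]]]]]]]]]]].
    assert (HkP : In k (fn P)) by (eapply phi_fn; eauto).
    pose proof (ug_fn_cnt k P HkP).
    assert (HR : ~ In k (fn R)) by (apply cntT_zero; lia).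
    assert (HAR : forall y, In y A -> ~ In y (fn R)) by (intros y Hy; specialize (H1 y Hy); rewrite in_app_iff in H1; tauto).
    exists m, A, V, U, (PPar R0 R). repeat split; auto.
    + intros y Hy. specialize (H1 y Hy). rewrite in_app_iff in H1. tauto.
    + rewrite H3. auto.
    + eapply sc_trans. apply sc_parl, H4. eapply sc_trans. apply nus_extrude; auto.
      apply sc_nus, sc_par_assoc.
    + rewrite (eta_nofree k R HR), (op_nofree k R HR).
      eapply sc_trans. apply sc_parl, H5. eapply sc_trans. apply nus_extrude; auto.
      apply sc_nus, sc_par_assoc.
    + simpl. rewrite H7. pose proof (cnt_nofree wT k R HR). lia.
  -
    rewrite (Kgood_scong _ _ _ H) in HK. rewrite (cnt_scong _ _ _ _ H) in HC.
    rewrite (ugx_scong _ _ _ H) in Hdug. rewrite <- (ugx_scong _ _ _ H1) in Hin.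
    destruct (IHred L HK HC Hdug Hin) as
      [m [A [V [U [R0 [H2 [H3 [H4 [H5 [H6 [H7 [H8 [H9 [H10 [H11 H12]]]]]]]]]]]]]]].
    exists m, A, V, U, R0. repeat split; auto.
    + rewrite (phi_scong _ _ _ H); auto. rewrite (cnt_scong _ _ _ _ H); auto.
    + eapply sc_trans. apply sc_sym, H1. auto.
    + eapply sc_trans. apply op_scong, eta_scong, H. auto.
Qed.


Lemma bisim_sym P Q : bs_bisim P Q -> bs_bisim Q P.
Proof. intros [Rel [[Hs Hb] HR]]. exists Rel. split; [split|]; auto. Qed.

Lemma scong_bisim P Q : scong P Q -> bs_bisim P Q.
Proof. intro H. exists scong. split; auto. split.
  - intros; apply sc_sym; auto.
  - intros P0 Q0 H0. split.
    + intros C n Hb. eapply barb_scong; eauto. apply fill_scong; auto.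
    + intros C P' Hr. exists P'. split; [|apply sc_refl].
      eapply r_scong. apply fill_scong, sc_sym, H0. exact Hr. apply sc_refl.
Qed.

Lemma bisim_trans P Q R : bs_bisim P Q -> bs_bisim Q R -> bs_bisim P R.
Proof. intros H1 H2.
  exists (fun X Z => exists Y, bs_bisim X Y /\ bs_bisim Y Z). split; [split|]; eauto.
  - intros X Z [Y [A B]]. exists Y; split; apply bisim_sym; auto.
  - intros X Z [Y [[R1 [[Hs1 Hb1] HR1]] [R2 [[Hs2 Hb2] HR2]]]]. split.
    + intros C n Hb. apply (proj1 (Hb2 _ _ HR2) C n). apply (proj1 (Hb1 _ _ HR1) C n). auto.
    + intros C X' Hr. destruct (proj2 (Hb1 _ _ HR1) C X' Hr) as [Y' [Hy1 Hy2]].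
      destruct (proj2 (Hb2 _ _ HR2) C Y' Hy1) as [Z' [Hz1 Hz2]].
      exists Z'. split; auto. exists Y'. split.
      exists R1; split; [split|]; auto. exists R2; split; [split|]; auto.
Qed.

Lemma sc_rearr1 a b c : scong (PPar (PPar a b) c) (PPar (PPar c a) b).
Proof. eapply sc_trans. apply sc_par_comm. apply sc_sym, sc_par_assoc. Qed.

Lemma sc_rearr2 a b c d : scong (PPar (PPar (PPar a b) c) d) (PPar (PPar a d) (PPar b c)).
Proof. eapply sc_trans. apply sc_parl, sc_par_assoc. eapply sc_trans. apply sc_par_assoc.
  eapply sc_trans. apply sc_parr, sc_par_comm. apply sc_sym, sc_par_assoc. Qed.

Theorem mainTheorem5 :
  forall (P Q P' : proc) (n : name) (T1 : proc),
    bs_bisim P Q ->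
    trans_coopen P n T1 P' ->
    exists Q', trans_coopen Q n T1 Q' /\ bs_bisim P' Q'.
Proof.
  intros P Q P' n T1 Hbis [A [P1 [P2 [HP [HnA [HAT HP']]]]]].
  destruct Hbis as [Rel [[Hsym Hb] HR]].
  destruct (exist (fun z => ~ In z (fn P ++ fn Q ++ fn T1 ++ A ++ [n])) _
       (fresh_not_in (fn P ++ fn Q ++ fn T1 ++ A ++ [n]))) as [k Hk].
  rewrite !in_app_iff in Hk. simpl in Hk.
  assert (HkP : ~ In k (fn P)) by tauto. assert (HkQ : ~ In k (fn Q)) by tauto.
  assert (HkT : ~ In k (fn T1)) by tauto. assert (HkA : ~ In k A) by tauto.
  assert (Hkn : k <> n) by (intro; subst; tauto).
  assert (HkP12 : ~ In k (fn P1) /\ ~ In k (fn P2)).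
  { split; intro Hx; apply HkP; apply (fn_scong _ _ HP); apply fn_nus; simpl;
    rewrite ?in_app_iff; simpl; auto. }
  destruct HkP12 as [HkP1 HkP2].
  set (O1 := PAct (COpen n) (PAmb k PNil)).
  set (P1'' := nus A (PPar (PPar (PAmb k PNil) P1) P2)).
  assert (Hr1 : red (PPar P O1) P1'').
  { eapply r_scong with (P' := nus A (PPar (PPar O1 (PAmb n P1)) P2)).
    - eapply sc_trans. apply sc_parl, HP. eapply sc_trans. apply nus_extrude.
      { intros y Hy. unfold O1; simpl. intros [H|[H|H]]; subst; tauto. }
      apply sc_nus. apply sc_rearr1.
    - apply red_nus. apply r_par. apply r_open.
    - apply sc_refl. }
  destruct (proj2 (Hb _ _ HR) (CParL CHole O1) P1'' Hr1) as [X [HX HRX]].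
  simpl in HX.
  assert (HbX : barb X k).
  { apply (proj1 (Hb _ _ HRX) CHole k). simpl. exists A, PNil, (PPar P1 P2). split; auto.
    apply sc_nus. apply sc_par_assoc. }
  apply barb_ug in HbX.
  assert (HK1 : Kgood k (PPar Q O1)).
  { simpl. split. apply Kgood_nofree; auto. split; auto. }
  assert (HC1 : cnt wT k (PPar Q O1) <= 1).
  { simpl. rewrite cnt_nofree by auto. rewrite Nat.eqb_refl.
    destruct (Nat.eqb_spec n k); [congruence|]. unfold wT, wA, wIO, wO; simpl; lia. }
  assert (HD1 : ~ In k (ugx true (PPar Q O1))).
  { simpl. rewrite app_nil_r. intro Hx; apply HkQ; eapply ugx_fn; eauto. }
  destruct (S1 k _ _ HX (fn T1 ++ [n; k]) HK1 HC1 HD1 HbX) as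
      [m [A2 [V [U [R [H1 [H2 [H3 [H4 [H5 [H6 [H7 [H8 [H9 [H10 H11]]]]]]]]]]]]]]].
  assert (Hphi : phi k (PPar Q O1) = Some (Some n)).
  { simpl. rewrite phi_nofree by auto. simpl. destruct (Nat.eq_dec k k); [reflexivity|congruence]. }
  rewrite Hphi in H3. destruct (in_dec Nat.eq_dec m A2) as [_|HmA]; [discriminate|].
  injection H3 as <-.
  assert (HQ : scong Q (nus A2 (PPar (PPar (PAmb n V) (op k U)) R))).
  { eapply sc_trans; [|apply H5].
    assert (E1 : eta k O1 = PAmb k PNil) by (unfold O1; simpl; destruct (Nat.eq_dec k k); congruence).
    change (eta k (PPar Q O1)) with (PPar (eta k Q) (eta k O1)). rewrite E1.
    simpl. rewrite eta_nofree, op_nofree by auto. rewrite Nat.eqb_refl. apply sc_sym, sc_par_nil. }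
  set (O2 := PAct (COpen k) T1).
  set (P'0 := nus A (PPar (PPar (PPar T1 PNil) P1) P2)).
  assert (Hr2 : red (PPar P1'' O2) P'0).
  { eapply r_scong with (P' := nus A (PPar (PPar (PPar O2 (PAmb k PNil)) P1) P2)).
    - eapply sc_trans. apply nus_extrude.
      { intros y Hy. unfold O2; simpl. intros [H|H]; subst; [tauto|]. eapply HAT; eauto. }
      apply sc_nus. eapply sc_trans. apply sc_rearr1. apply sc_parl.
      apply sc_sym, sc_par_assoc.
    - apply red_nus. apply r_par. apply r_par. apply r_open.
    - apply sc_refl. }
  destruct (proj2 (Hb _ _ HRX) (CParL CHole O2) P'0 Hr2) as [W [HW HRW]].
  simpl in HW.
  assert (HnW : ~ In k (ugx false W)).
  { intro Hx. apply ug_barb in Hx. apply (proj1 (Hb _ _ (Hsym _ _ HRW)) CHole k) in Hx.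
    simpl in Hx. apply barb_ug, ugx_fn in Hx. unfold P'0 in Hx. rewrite fn_nus in Hx. simpl in Hx.
    rewrite !in_app_iff in Hx. simpl in Hx. tauto. }
  assert (HV : ~ In k (fn V)) by (apply cntT_zero; auto).
  assert (HRk : ~ In k (fn R)) by (apply cntT_zero; auto).
  pose proof (cntT_split k U) as HsU. pose proof (ug_cntA k U H9) as HaU.
  assert (HcX : forall w, cnt w k X = cnt w k U).
  { intro w. rewrite (cnt_scong _ _ _ _ H4), cnt_nus by auto. simpl.
    rewrite (cnt_nofree w k V HV), (cnt_nofree w k R HRk). lia. }
  assert (HK2 : Kgood k (PPar X O2)).
  { simpl. split; [|apply Kgood_nofree; auto]. apply (Kgood_scong _ _ _ H4).
    apply Kgood_nus. simpl. repeat split; auto; apply Kgood_nofree; auto. }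
  assert (HX2 : In k (ugx false (PPar X O2))) by (simpl; rewrite app_nil_r; auto).
  unfold O2 in HK2, HX2.
  destruct (S2 k _ _ HW HK2) as [_ HW2]; auto.
  - simpl. rewrite HcX, Nat.eqb_refl, (cnt_nofree _ k T1 HkT). unfold wA at 2; simpl. lia.
  - simpl. rewrite HcX, Nat.eqb_refl, (cnt_nofree _ k T1 HkT). unfold wO at 2; simpl. lia.
  - simpl. rewrite HcX, Nat.eqb_refl, (cnt_nofree _ k T1 HkT). unfold wIO at 2; simpl. lia.
  - simpl in HW2. rewrite Nat.eqb_refl in HW2.
    assert (HAT2 : forall y, In y A2 -> ~ In y (fn T1)).
    { intros y Hy. specialize (H1 y Hy). rewrite in_app_iff in H1. tauto. }
    exists (nus A2 (PPar (PPar V T1) (PPar (op k U) R))). split.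
    + exists A2, V, (PPar (op k U) R). repeat split; auto.
      * eapply sc_trans. apply HQ. apply sc_nus, sc_par_assoc.
      * apply sc_refl.
    + apply bisim_trans with P'0.
      { apply scong_bisim. eapply sc_trans. apply HP'. apply sc_nus. apply sc_parl.
        eapply sc_trans. apply sc_par_comm. apply sc_parl. apply sc_sym, sc_par_nil. }
      apply bisim_trans with W.
      { exists Rel. split; [split|]; auto. }
      apply scong_bisim. eapply sc_trans. apply HW2.
      eapply sc_trans. apply sc_parl. apply op_scong, H4.
      rewrite op_nus by auto. simpl. rewrite (op_nofree k V HV), (op_nofree k R HRk).
      eapply sc_trans. apply nus_extrude; auto.
      apply sc_nus. apply sc_rearr2.
Qed.
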